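(* Let $\alpha=(\alpha_1,\alpha_2,\alpha_3)\in\mathbb{C}^3$ and $\beta=(\beta_1,\beta_2,\beta_3)\in\mathbb{C}^3$ both satisfy the triangle inequality. Then there exists an automorphism $\varphi\in\operatorname{Aut}(\mathbb{D}^3)$ of the tridisc such that $\varphi(M_\alpha)=M_\beta$.
   Context: $\mathbb{D}$ denotes the open unit disc in $\mathbb{C}$. For $\alpha=(\alpha_1,\alpha_2,\alpha_3)\in\mathbb{C}^3\setminus\{0\}$ let $$M_\alpha=\{(z_1,z_2,z_3)\in\mathbb{D}^3:\ \alpha_1z_1+\alpha_2z_2+\alpha_3z_3=\overline{\alpha_1}z_2z_3+\overline{\alpha_2}z_1z_3+\overline{\alpha_3}z_1z_2\}.$$ A triple $\alpha\in\mathbb{C}^3$ satisfies the triangle inequality if $|\alpha_i|+|\alpha_j|>|\alpha_k|$ for every permutation $(i,j,k)$ of $(1,2,3)$. *)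

(* Defs.v *)
From Stdlib Require Import Reals.
From Coquelicot Require Export Coquelicot.
Open Scope R_scope.

Definition C3 := (C * C * C)%type.
Definition c1 (p : C3) : C := fst (fst p).
Definition c2 (p : C3) : C := snd (fst p).
Definition c3 (p : C3) : C := snd p.

Definition inD (z : C) : Prop := Cmod z < 1.
Definition inD3 (p : C3) : Prop := inD (c1 p) /\ inD (c2 p) /\ inD (c3 p).

(* Holomorphy of f : C^3 -> C on the tridisc (Osgood's definition):
   continuous at every point of D^3 and complex differentiable in each
   variable separately (complex derivative in the sense of Coquelicot's
   [ex_derive] over the absolute ring C). *)
Definition holo3 (f : C3 -> C) : Prop :=
  forall p : C3, inD3 p ->
    continuous f p /\
    ex_derive (fun w : C => f (w, c2 p, c3 p)) (c1 p) /\
    ex_derive (fun w : C => f (c1 p, w, c3 p)) (c2 p) /\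
    ex_derive (fun w : C => f (c1 p, c2 p, w)) (c3 p).

Definition holo_self_map (F : C3 -> C3) : Prop :=
  holo3 (fun p => c1 (F p)) /\ holo3 (fun p => c2 (F p)) /\
  holo3 (fun p => c3 (F p)) /\ (forall p, inD3 p -> inD3 (F p)).

Definition is_aut_D3 (F : C3 -> C3) : Prop :=
  holo_self_map F /\
  exists G : C3 -> C3, holo_self_map G /\
    (forall p, inD3 p -> G (F p) = p) /\ (forall p, inD3 p -> F (G p) = p).

Definition Mset (a : C3) (z : C3) : Prop :=
  inD3 z /\
  (c1 a * c1 z + c2 a * c2 z + c3 a * c3 z
   = Cconj (c1 a) * c2 z * c3 z + Cconj (c2 a) * c1 z * c3 z
     + Cconj (c3 a) * c1 z * c2 z)%C.

Definition nonzero3 (a : C3) : Prop := a <> ((RtoC 0, RtoC 0), RtoC 0).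

Definition triangle_ineq (a : C3) : Prop :=
  Cmod (c1 a) + Cmod (c2 a) > Cmod (c3 a) /\
  Cmod (c1 a) + Cmod (c3 a) > Cmod (c2 a) /\
  Cmod (c2 a) + Cmod (c3 a) > Cmod (c1 a).

(* Main.v *)
Require Import Defs.
From Stdlib Require Import Reals Lra.
From Coquelicot Require Import Coquelicot.

Lemma Cinv_derive (x : C) : x <> 0%C -> is_derive (fun y : C => Cinv y) x (Copp (/ (x*x)))%C.
Proof.
intros Hx. split. apply is_linear_scal_l.
intros x0 Hx0. apply (is_filter_lim_locally_unique (K:=C_AbsRing) (V:=AbsRing_NormedModule C_AbsRing)) in Hx0. subst x0.
intros eps. apply (locally_le_locally_norm (K:=C_AbsRing) (V:=AbsRing_NormedModule C_AbsRing)).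
assert (HX : 0 < Cmod x) by (apply Cmod_gt_0; auto).
set (X := Cmod x) in *.
assert (Hd : 0 < Rmin (X/2) (eps * (X*X*X) / 2)).
{ apply Rmin_pos. lra. apply Rmult_lt_0_compat; [|lra].
  apply Rmult_lt_0_compat. apply cond_pos. repeat apply Rmult_lt_0_compat; auto. }
exists (mkposreal _ Hd). intros y0 Hy. unfold ball_norm in Hy. simpl in Hy. set (y := (y0 : C)) in *. clearbody y. clear y0.
change (Cmod (y - x)%C < Rmin (X / 2) (eps * (X * X * X) / 2)) in Hy.
change (Cmod ((/ y - / x) - (y - x) * (- / (x * x)))%C <= eps * Cmod (y - x)%C).
set (h := (y - x)%C) in *.
assert (Hy1 : Rmin (X / 2) (eps * (X * X * X) / 2) <= X/2) by apply Rmin_l.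
assert (Hy2 : Rmin (X / 2) (eps * (X * X * X) / 2) <= eps * (X * X * X) / 2) by apply Rmin_r.
assert (Hyy : y = (x + h)%C) by (unfold h; ring).
assert (HY : X/2 < Cmod y).
{ assert (Cmod x <= Cmod y + Cmod h).
  { replace x with (y + - h)%C by (unfold h; ring).
    eapply Rle_trans. apply Cmod_triangle. rewrite Cmod_opp.
    fold h. replace (y + - h + h)%C with y by ring. lra. }
  fold X in H. lra. }
assert (Hy0 : y <> 0%C) by (apply Cmod_gt_0; lra).
replace ((/ y - / x) - h * (- / (x * x)))%C with (h * h / (x * x * y))%C.
2:{ rewrite Hyy. field. split; auto. rewrite <- Hyy; auto. }
rewrite Cmod_div. 2:{ repeat apply Cmult_neq_0; auto. }
rewrite !Cmod_mult. fold X.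
set (H := Cmod h) in *. set (Y := Cmod y) in *.
assert (0 <= H) by apply Cmod_ge_0.
apply Rle_trans with (H * H * 2 / (X*X*X)).
{ replace (H*H*2/(X*X*X)) with (H*H * / (X*X*(X/2))) by (field; lra).
  unfold Rdiv. apply Rmult_le_compat_l. nra.
  apply Rinv_le_contravar. repeat apply Rmult_lt_0_compat; lra.
  apply Rmult_le_compat_l; nra. }
apply Rmult_le_reg_l with (X*X*X). repeat apply Rmult_lt_0_compat; lra.
field_simplify; try lra. nra.
Qed.

Lemma exd_Cinv (x : C) : x <> 0%C -> ex_derive (fun y : C => Cinv y) x.
Proof. intros H. eexists. apply Cinv_derive; auto. Qed.

Lemma tr (f : C -> C) z l : @is_derive C_AbsRing C_NormedModule f z l <-> @is_derive C_AbsRing (AbsRing_NormedModule C_AbsRing) f z l.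
Proof.
split; intros [_ H2]; (split; [apply is_linear_scal_l|]); intros x0 Hx0 eps;
generalize (H2 x0 Hx0 eps); apply filter_imp; intros y; exact (fun h => h).
Qed.

Lemma exd_mult (f g : C -> C) (z : C) : ex_derive f z -> ex_derive g z ->
  ex_derive (fun t => f t * g t)%C z.
Proof. intros [df Hf] [dg Hg]. eexists.
  apply tr in Hf. apply tr in Hg. apply tr.
  exact (is_derive_mult f g z df dg Hf Hg (fun n m => Cmult_comm n m)). Qed.

Lemma exd_plus (f g : C -> C) (z : C) : ex_derive f z -> ex_derive g z ->
  ex_derive (fun t => f t + g t)%C z.
Proof. intros [df Hf] [dg Hg]. eexists.
  apply (is_derive_plus f g z df dg Hf Hg). Qed.

Lemma exd_const (a z : C) : ex_derive (fun _ : C => a) z.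
Proof. eexists. apply is_derive_const. Qed.

Lemma exd_id (z : C) : ex_derive (fun t : C => t) z.
Proof. eexists. apply tr. apply is_derive_id. Qed.

Lemma exd_comp (f g : C -> C) (z : C) : ex_derive f (g z) -> ex_derive g z ->
  ex_derive (fun t => f (g t)) z.
Proof. intros H1 [d H2]. apply ex_derive_comp; auto. exists d. apply tr; auto. Qed.

Definition cay (t : C) : C := ((1 - t) / (1 + t))%C.

Lemma exd_ext (f g : C -> C) (z : C) : (forall t, f t = g t) -> ex_derive f z -> ex_derive g z.
Proof. intros E [d Hd]. exists d. apply (is_derive_ext f g); auto. Qed.

Lemma exd_cay (t : C) : (1 + t <> 0)%C -> ex_derive cay t.
Proof.
intros H. apply (exd_ext (fun t => (1 + (-1) * t) * / (1 + t))%C).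
{ intros; unfold cay, Cdiv; ring. }
apply exd_mult.
- apply (exd_plus (fun _ => 1%C) (fun t => (-1) * t)%C).
  apply exd_const. apply (exd_mult (fun _ => (-1)%C) (fun t => t)). apply exd_const. apply exd_id.
- apply (exd_comp Cinv (fun t => 1 + t)%C). apply exd_Cinv; auto.
  apply (exd_plus (fun _ => 1%C) (fun t => t)). apply exd_const. apply exd_id.
Qed.

Lemma Cmod_lt1 (p q : R) : Cmod (p, q) < 1 -> p*p + q*q < 1.
Proof. intros H. generalize (Cmod2_alt (p,q)) (Cmod_ge_0 (p,q)). simpl. intros. nra. Qed.

Lemma Cmod_lt1' (p q : R) : p*p + q*q < 1 -> Cmod (p, q) < 1.
Proof. intros H. generalize (Cmod2_alt (p,q)) (Cmod_ge_0 (p,q)). simpl. intros. nra. Qed.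

Lemma Re_cay (y : C) : Cmod y < 1 -> 0 < Re (cay y).
Proof.
destruct y as [p q]. intros H. apply Cmod_lt1 in H.
assert (HD : 0 < (1+p)*(1+p) + q*q) by nra.
unfold cay, Cdiv, Cminus, Cplus, Cmult, Cinv, Copp, Re; simpl.
match goal with |- 0 < ?e => replace e with ((1 - (p*p+q*q)) / ((1+p)*(1+p) + q*q)) by (field; lra) end.
apply Rdiv_lt_0_compat; lra.
Qed.

Lemma cay_disc (x : C) : 0 < Re x -> Cmod (cay x) < 1.
Proof.
destruct x as [p q]. simpl. intros Hp.
assert (HD : 0 < (1+p)*(1+p) + q*q) by nra.
assert (Hre : Re (cay (p,q)) = (1 - (p*p+q*q)) / ((1+p)*(1+p) + q*q)).
{ unfold cay, Cdiv, Cminus, Cplus, Cmult, Cinv, Copp, Re; simpl. field; lra. }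
assert (Him : Im (cay (p,q)) = - (2*q) / ((1+p)*(1+p) + q*q)).
{ unfold cay, Cdiv, Cminus, Cplus, Cmult, Cinv, Copp, Im; simpl. field; lra. }
destruct (cay (p,q)) as [u v]. simpl in Hre, Him. subst u v.
apply Cmod_lt1'.
replace ((1 - (p * p + q * q)) / ((1 + p) * (1 + p) + q * q) *
 ((1 - (p * p + q * q)) / ((1 + p) * (1 + p) + q * q)) +
 - (2 * q) / ((1 + p) * (1 + p) + q * q) * (- (2 * q) / ((1 + p) * (1 + p) + q * q)))
 with (((1-p)*(1-p) + q*q) / ((1+p)*(1+p) + q*q)) by (field; lra).
apply Rmult_lt_reg_r with ((1+p)*(1+p) + q*q); auto.
unfold Rdiv. rewrite Rmult_assoc, Rinv_l by lra. nra.
Qed.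

Lemma Re_1plus_nz (x : C) : 0 < Re x -> (1 + x <> 0)%C.
Proof. intros H E. apply (f_equal Re) in E. rewrite re_plus in E. simpl in E. lra. Qed.

Lemma disc_1plus_nz (y : C) : Cmod y < 1 -> (1 + y <> 0)%C.
Proof. intros H E. apply (f_equal Re) in E. rewrite re_plus in E. simpl in E.
  generalize (re_le_Cmod y). intros H2. apply Rabs_le_between in H2. lra. Qed.

Lemma cay_invol (w : C) : (1 + w <> 0)%C -> cay (cay w) = w.
Proof. intros H. unfold cay. field. split; auto.
  intro E. apply (f_equal Re) in E. simpl in E. lra. Qed.

Definition phi (m n : C) (c : R) (z : C) : C := (n * cay (RtoC c * cay (z / m)))%C.

Lemma unit_nz (m : C) : Cmod m = 1 -> m <> 0%C.
Proof. intros H E. rewrite E, Cmod_0 in H. lra. Qed.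

Lemma Cmod_div1 (z m : C) : Cmod m = 1 -> Cmod (z / m) = Cmod z.
Proof. intros H. rewrite Cmod_div by (apply unit_nz; auto). rewrite H. field. Qed.

Lemma Re_inner (m : C) (c : R) (z : C) : Cmod m = 1 -> 0 < c -> Cmod z < 1 ->
  0 < Re (RtoC c * cay (z / m)).
Proof. intros Hm Hc Hz. rewrite re_scal_l. apply Rmult_lt_0_compat; auto.
  apply Re_cay. rewrite Cmod_div1; auto. Qed.

Lemma phi_disc (m n : C) (c : R) (z : C) : Cmod m = 1 -> Cmod n = 1 -> 0 < c -> Cmod z < 1 ->
  Cmod (phi m n c z) < 1.
Proof. intros Hm Hn Hc Hz. unfold phi. rewrite Cmod_mult, Hn, Rmult_1_l.
  apply cay_disc. apply Re_inner; auto. Qed.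

Lemma phi_exd (m n : C) (c : R) (z : C) : Cmod m = 1 -> 0 < c -> Cmod z < 1 ->
  ex_derive (phi m n c) z.
Proof. intros Hm Hc Hz. unfold phi.
  apply (exd_mult (fun _ => n) (fun z => cay (RtoC c * cay (z / m)))%C). apply exd_const.
  apply (exd_comp cay (fun z => RtoC c * cay (z / m))%C).
  apply exd_cay. apply Re_1plus_nz. apply Re_inner; auto.
  apply (exd_mult (fun _ => RtoC c) (fun z => cay (z / m))%C). apply exd_const.
  apply (exd_comp cay (fun z => z / m)%C).
  apply exd_cay. apply disc_1plus_nz. rewrite Cmod_div1; auto.
  apply (exd_mult (fun z => z) (fun _ => / m)%C). apply exd_id. apply exd_const.
Qed.

Lemma phi_inv (m n : C) (c : R) (z : C) : Cmod m = 1 -> Cmod n = 1 -> 0 < c -> Cmod z < 1 ->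
  phi n m (/ c) (phi m n c z) = z.
Proof. intros Hm Hn Hc Hz. unfold phi.
  replace ((n * cay (RtoC c * cay (z / m))) / n)%C with (cay (RtoC c * cay (z / m)))%C
    by (field; apply unit_nz; auto).
  rewrite cay_invol by (apply Re_1plus_nz; apply Re_inner; auto).
  replace (RtoC (/ c) * (RtoC c * cay (z / m)))%C with (cay (z / m)).
  2:{ rewrite RtoC_inv by lra. field. intro E. injection E. lra. }
  rewrite cay_invol by (apply disc_1plus_nz; rewrite Cmod_div1; auto).
  field. apply unit_nz; auto.
Qed.

Lemma phi_inv2 (m n : C) (c : R) (z : C) : Cmod m = 1 -> Cmod n = 1 -> 0 < c -> Cmod z < 1 ->
  phi m n c (phi n m (/ c) z) = z.
Proof. intros. generalize (phi_inv n m (/ c) z). rewrite Rinv_inv. intros E; apply E; auto.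
  apply Rinv_0_lt_compat; auto. Qed.

Lemma sqrt2_lt2 : sqrt 2 < 2.
Proof. rewrite <- (sqrt_square 2) at 2 by lra. apply sqrt_lt_1; lra. Qed.

Lemma cont_transfer (f : C -> C) (x : C) :
  @continuous (AbsRing_UniformSpace C_AbsRing) C_UniformSpace f x ->
  @continuous C_UniformSpace C_UniformSpace f x.
Proof.
intros H. unfold continuous in *. eapply filterlim_filter_le_1; [|exact H].
intros P [eps HP]. assert (He : 0 < eps / 2) by (generalize (cond_pos eps); lra).
exists (mkposreal _ He). intros y Hy. apply HP.
generalize (C_NormedModule_mixin_compat2 x y (mkposreal _ He) Hy). simpl.
intros H2. change (Cmod (minus y x) < eps). apply Rlt_trans with (sqrt 2 * (eps/2)); [exact H2|]. generalize sqrt2_lt2 (cond_pos eps). nra.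
Qed.

Definition cw (f1 f2 f3 : C -> C) (p : C3) : C3 := (f1 (Defs.c1 p), f2 (c2 p), f3 (c3 p)).

Lemma fcont (f : C -> C) (x : C) : ex_derive f x -> @continuous C_UniformSpace C_UniformSpace f x.
Proof. intros H. apply cont_transfer. apply (ex_derive_continuous f x H). Qed.

Lemma holo_c1 (f : C -> C) : (forall z, inD z -> ex_derive f z) -> holo3 (fun p => f (Defs.c1 p)).
Proof.
intros Hf p Hp. destruct p as [[x y] z]. destruct Hp as [H1 [H2 H3]]. unfold Defs.c1, c2, c3 in *; simpl in *.
split; [|split; [|split]].
- apply (continuous_comp (fun p : C3 => fst (fst p)) f).
  apply (continuous_comp (fun p : C3 => fst p) fst). apply continuous_fst. apply continuous_fst.
  apply fcont. apply Hf; auto.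
- apply Hf; auto.
- apply exd_const.
- apply exd_const.
Qed.

Lemma holo_c2 (f : C -> C) : (forall z, inD z -> ex_derive f z) -> holo3 (fun p => f (c2 p)).
Proof.
intros Hf p Hp. destruct p as [[x y] z]. destruct Hp as [H1 [H2 H3]]. unfold Defs.c1, c2, c3 in *; simpl in *.
split; [|split; [|split]].
- apply (continuous_comp (fun p : C3 => snd (fst p)) f).
  apply (continuous_comp (fun p : C3 => fst p) snd). apply continuous_fst. apply continuous_snd.
  apply fcont. apply Hf; auto.
- apply exd_const.
- apply Hf; auto.
- apply exd_const.
Qed.

Lemma holo_c3 (f : C -> C) : (forall z, inD z -> ex_derive f z) -> holo3 (fun p => f (c3 p)).
Proof.
intros Hf p Hp. destruct p as [[x y] z]. destruct Hp as [H1 [H2 H3]]. unfold Defs.c1, c2, c3 in *; simpl in *.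
split; [|split; [|split]].
- apply (continuous_comp (fun p : C3 => snd p) f). apply continuous_snd.
  apply fcont. apply Hf; auto.
- apply exd_const.
- apply exd_const.
- apply Hf; auto.
Qed.

Lemma cw_holo (f1 f2 f3 : C -> C) :
  (forall z, inD z -> ex_derive f1 z /\ inD (f1 z)) ->
  (forall z, inD z -> ex_derive f2 z /\ inD (f2 z)) ->
  (forall z, inD z -> ex_derive f3 z /\ inD (f3 z)) ->
  holo_self_map (cw f1 f2 f3).
Proof.
intros H1 H2 H3. split; [|split; [|split]].
- apply (holo_c1 f1). intros; apply H1; auto.
- apply (holo_c2 f2). intros; apply H2; auto.
- apply (holo_c3 f3). intros; apply H3; auto.
- intros p [Hp1 [Hp2 Hp3]]. split; [|split]; simpl; [apply H1|apply H2|apply H3]; auto.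
Qed.

Definition Meq (a z : C3) : Prop :=
  (Defs.c1 a * Defs.c1 z + c2 a * c2 z + c3 a * c3 z
   = Cconj (Defs.c1 a) * c2 z * c3 z + Cconj (c2 a) * Defs.c1 z * c3 z
     + Cconj (c3 a) * Defs.c1 z * c2 z)%C.

Definition Req (r1 r2 r3 y1 y2 y3 : C) : Prop :=
  (r1 * y1 + r2 * y2 + r3 * y3 = r1 * y2 * y3 + r2 * y1 * y3 + r3 * y1 * y2)%C.

Definition Heq (A1 A2 A3 S x1 x2 x3 : C) : Prop :=
  (A1 * x1 + A2 * x2 + A3 * x3 = S * x1 * x2 * x3)%C.

Lemma eq_scale (X Y X' Y' k : C) : k <> 0%C -> (X - Y = k * (X' - Y'))%C -> (X = Y <-> X' = Y').
Proof.
intros Hk E. split; intros H.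
- rewrite H in E. replace (Y - Y)%C with (RtoC 0) in E by ring.
  assert (X' - Y' = 0)%C.
  { replace (X' - Y')%C with (/ k * (k * (X' - Y')))%C by (field; auto). rewrite <- E. ring. }
  replace X' with (X' - Y' + Y')%C by ring. rewrite H0. ring.
- rewrite H in E. replace (Y' - Y')%C with (RtoC 0) in E by ring. rewrite Cmult_0_r in E.
  replace X with (X - Y + Y)%C by ring. rewrite E. ring.
Qed.

Lemma Cinv_neq_0 (x : C) : x <> RtoC 0 -> (/ x <> RtoC 0)%C.
Proof. intros H E. assert (E2 : (x * / x)%C = RtoC 1) by (field; auto).
  rewrite E, Cmult_0_r in E2. injection E2. lra. Qed.

Lemma L1 (a1 a2 a3 r1 r2 r3 u1 u2 u3 y1 y2 y3 : C) :
  u1 <> 0%C -> u2 <> 0%C -> u3 <> 0%C ->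
  a1 = (r1 * u1)%C -> a2 = (r2 * u2)%C -> a3 = (r3 * u3)%C ->
  Cconj a1 = (r1 / u1)%C -> Cconj a2 = (r2 / u2)%C -> Cconj a3 = (r3 / u3)%C ->
  (Meq ((a1, a2), a3) ((u2 * u3 * y1, u1 * u3 * y2), u1 * u2 * y3)%C <-> Req r1 r2 r3 y1 y2 y3).
Proof.
intros H1 H2 H3 E1 E2 E3 F1 F2 F3. unfold Meq, Req; simpl. unfold Defs.c1, c2, c3; simpl.
rewrite F1, F2, F3, E1, E2, E3. apply eq_scale with (u1 * u2 * u3)%C.
repeat apply Cmult_neq_0; auto. field. auto.
Qed.

Lemma L2 (r1 r2 r3 x1 x2 x3 : C) :
  (1 + x1 <> 0)%C -> (1 + x2 <> 0)%C -> (1 + x3 <> 0)%C ->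
  (Req r1 r2 r3 (cay x1) (cay x2) (cay x3) <->
   Heq (r2 + r3 - r1) (r1 + r3 - r2) (r1 + r2 - r3) (r1 + r2 + r3) x1 x2 x3)%C.
Proof.
intros H1 H2 H3. unfold Req, Heq, cay.
apply eq_scale with (2 / ((1 + x1) * (1 + x2) * (1 + x3)))%C.
- unfold Cdiv. apply Cmult_neq_0. intro E. injection E. lra.
  apply Cinv_neq_0. repeat apply Cmult_neq_0; auto.
- field. auto.
Qed.

Lemma L3 (A1 A2 A3 SA B1 B2 B3 SB c1 c2 c3 k x1 x2 x3 : C) :
  k <> 0%C -> (B1 * c1 = k * A1)%C -> (B2 * c2 = k * A2)%C -> (B3 * c3 = k * A3)%C ->
  (SB * c1 * c2 * c3 = k * SA)%C ->
  (Heq B1 B2 B3 SB (c1 * x1) (c2 * x2) (c3 * x3) <-> Heq A1 A2 A3 SA x1 x2 x3)%C.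
Proof.
intros Hk E1 E2 E3 E4. unfold Heq. apply eq_scale with k; auto.
transitivity ((B1 * c1) * x1 + (B2 * c2) * x2 + (B3 * c3) * x3 - (SB * c1 * c2 * c3) * x1 * x2 * x3)%C.
ring. rewrite E1, E2, E3, E4. ring.
Qed.

Lemma decomp (al : C) : 0 < Cmod al ->
  (al / RtoC (Cmod al) <> RtoC 0)%C /\ Cmod (al / RtoC (Cmod al))%C = 1 /\
  al = (RtoC (Cmod al) * (al / RtoC (Cmod al)))%C /\
  Cconj al = (RtoC (Cmod al) / (al / RtoC (Cmod al)))%C.
Proof.
intros H. assert (Ha : al <> RtoC 0) by (apply Cmod_gt_0; auto).
assert (Hr : RtoC (Cmod al) <> RtoC 0) by (intro E; injection E; lra).
assert (Hm : Cmod (al / RtoC (Cmod al))%C = 1).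
{ rewrite Cmod_div by auto. rewrite Cmod_R, Rabs_pos_eq by lra. field. lra. }
split; [|split; [auto|split]].
- apply unit_nz; auto.
- field; auto.
- generalize (Cmod2_conj al). rewrite RtoC_pow. intros E.
  apply (f_equal (fun t => t / al)%C) in E.
  replace (al * Cconj al / al)%C with (Cconj al) in E by (field; auto).
  rewrite <- E. simpl. field. auto.
Qed.

Lemma unit_mult (u v : C) : Cmod u = 1 -> Cmod v = 1 -> Cmod (u * v)%C = 1.
Proof. intros. rewrite Cmod_mult. rewrite H, H0. ring. Qed.

Theorem theorem1 (a b : C3) :
  nonzero3 a -> nonzero3 b -> triangle_ineq a -> triangle_ineq b ->
  exists F : C3 -> C3, is_aut_D3 F /\
    (forall w : C3, Mset b w <-> exists z : C3, Mset a z /\ F z = w).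
Proof.
intros _ _ Ta Tb.
destruct a as [[a1 a2] a3]. destruct b as [[b1 b2] b3].
unfold triangle_ineq, Defs.c1, c2, c3 in Ta, Tb; simpl in Ta, Tb.
assert (Pa1 : 0 < Cmod a1) by lra. assert (Pa2 : 0 < Cmod a2) by lra. assert (Pa3 : 0 < Cmod a3) by lra.
assert (Pb1 : 0 < Cmod b1) by lra. assert (Pb2 : 0 < Cmod b2) by lra. assert (Pb3 : 0 < Cmod b3) by lra.
destruct (decomp a1 Pa1) as [Hu1 [Mu1 [Ea1 Fa1]]].
destruct (decomp a2 Pa2) as [Hu2 [Mu2 [Ea2 Fa2]]].
destruct (decomp a3 Pa3) as [Hu3 [Mu3 [Ea3 Fa3]]].
destruct (decomp b1 Pb1) as [Hv1 [Mv1 [Eb1 Fb1]]].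
destruct (decomp b2 Pb2) as [Hv2 [Mv2 [Eb2 Fb2]]].
destruct (decomp b3 Pb3) as [Hv3 [Mv3 [Eb3 Fb3]]].
set (u1 := (a1 / RtoC (Cmod a1))%C) in *.
set (u2 := (a2 / RtoC (Cmod a2))%C) in *.
set (u3 := (a3 / RtoC (Cmod a3))%C) in *.
set (v1 := (b1 / RtoC (Cmod b1))%C) in *.
set (v2 := (b2 / RtoC (Cmod b2))%C) in *.
set (v3 := (b3 / RtoC (Cmod b3))%C) in *.
clearbody u1 u2 u3 v1 v2 v3.
set (r1 := Cmod a1) in *. set (r2 := Cmod a2) in *. set (r3 := Cmod a3) in *.
set (s1 := Cmod b1) in *. set (s2 := Cmod b2) in *. set (s3 := Cmod b3) in *.
clearbody r1 r2 r3 s1 s2 s3.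
assert (PA1 : 0 < r2 + r3 - r1) by lra. assert (PA2 : 0 < r1 + r3 - r2) by lra.
assert (PA3 : 0 < r1 + r2 - r3) by lra.
assert (PB1 : 0 < s2 + s3 - s1) by lra. assert (PB2 : 0 < s1 + s3 - s2) by lra.
assert (PB3 : 0 < s1 + s2 - s3) by lra.
assert (PSA : 0 < r1 + r2 + r3) by lra. assert (PSB : 0 < s1 + s2 + s3) by lra.
set (Q := (r1 + r2 + r3) * (s2 + s3 - s1) * (s1 + s3 - s2) * (s1 + s2 - s3) /
  ((s1 + s2 + s3) * (r2 + r3 - r1) * (r1 + r3 - r2) * (r1 + r2 - r3))).
assert (PQ : 0 < Q).
{ unfold Q. apply Rdiv_lt_0_compat; repeat apply Rmult_lt_0_compat; auto. }
set (kp := sqrt Q).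
assert (Pk : 0 < kp) by (apply sqrt_lt_R0; auto).
assert (Ekk : kp * kp = Q) by (apply sqrt_sqrt; lra).
clearbody kp.
set (k1 := kp * (r2 + r3 - r1) / (s2 + s3 - s1)).
set (k2 := kp * (r1 + r3 - r2) / (s1 + s3 - s2)).
set (k3 := kp * (r1 + r2 - r3) / (s1 + s2 - s3)).
assert (Pk1 : 0 < k1) by (unfold k1; apply Rdiv_lt_0_compat; auto; apply Rmult_lt_0_compat; auto).
assert (Pk2 : 0 < k2) by (unfold k2; apply Rdiv_lt_0_compat; auto; apply Rmult_lt_0_compat; auto).
assert (Pk3 : 0 < k3) by (unfold k3; apply Rdiv_lt_0_compat; auto; apply Rmult_lt_0_compat; auto).
assert (R1 : (s2 + s3 - s1) * k1 = kp * (r2 + r3 - r1)) by (unfold k1; field; lra).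
assert (R2 : (s1 + s3 - s2) * k2 = kp * (r1 + r3 - r2)) by (unfold k2; field; lra).
assert (R3 : (s1 + s2 - s3) * k3 = kp * (r1 + r2 - r3)) by (unfold k3; field; lra).
assert (R4 : (s1 + s2 + s3) * k1 * k2 * k3 = kp * (r1 + r2 + r3)).
{ unfold k1, k2, k3.
  replace ((s1 + s2 + s3) * (kp * (r2 + r3 - r1) / (s2 + s3 - s1)) * (kp * (r1 + r3 - r2) / (s1 + s3 - s2)) *
    (kp * (r1 + r2 - r3) / (s1 + s2 - s3)))
  with (kp * (kp * kp) * ((s1 + s2 + s3) * (r2 + r3 - r1) * (r1 + r3 - r2) * (r1 + r2 - r3)) /
     ((s2 + s3 - s1) * (s1 + s3 - s2) * (s1 + s2 - s3))) by (field; lra).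
  rewrite Ekk. unfold Q. field. repeat split; lra. }
clearbody k1 k2 k3.
assert (C1 : ((RtoC s2 + RtoC s3 - RtoC s1) * RtoC k1 = RtoC kp * (RtoC r2 + RtoC r3 - RtoC r1))%C).
{ rewrite <- !RtoC_plus, <- !RtoC_minus, <- !RtoC_mult. rewrite R1. reflexivity. }
assert (C2 : ((RtoC s1 + RtoC s3 - RtoC s2) * RtoC k2 = RtoC kp * (RtoC r1 + RtoC r3 - RtoC r2))%C).
{ rewrite <- !RtoC_plus, <- !RtoC_minus, <- !RtoC_mult. rewrite R2. reflexivity. }
assert (C3' : ((RtoC s1 + RtoC s2 - RtoC s3) * RtoC k3 = RtoC kp * (RtoC r1 + RtoC r2 - RtoC r3))%C).
{ rewrite <- !RtoC_plus, <- !RtoC_minus, <- !RtoC_mult. rewrite R3. reflexivity. }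
assert (C4 : ((RtoC s1 + RtoC s2 + RtoC s3) * RtoC k1 * RtoC k2 * RtoC k3 = RtoC kp * (RtoC r1 + RtoC r2 + RtoC r3))%C).
{ rewrite <- !RtoC_plus, <- !RtoC_mult. rewrite R4. reflexivity. }
assert (Hkp : RtoC kp <> RtoC 0) by (intro E; injection E; lra).
set (F := cw (phi (u2 * u3) (v2 * v3) k1) (phi (u1 * u3) (v1 * v3) k2) (phi (u1 * u2) (v1 * v2) k3)).
set (G := cw (phi (v2 * v3) (u2 * u3) (/ k1)) (phi (v1 * v3) (u1 * u3) (/ k2)) (phi (v1 * v2) (u1 * u2) (/ k3))).
assert (Key : forall z, inD3 z -> (Meq ((b1, b2), b3) (F z) <-> Meq ((a1, a2), a3) z)).
{ intros [[z1 z2] z3] [Hz1 [Hz2 Hz3]]. unfold inD, Defs.c1, c2, c3 in Hz1, Hz2, Hz3; simpl in Hz1, Hz2, Hz3.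
  unfold F, cw, phi, Defs.c1, c2, c3. cbn [fst snd].
  assert (M1 : Cmod (u2 * u3)%C = 1) by (apply unit_mult; auto).
  assert (M2 : Cmod (u1 * u3)%C = 1) by (apply unit_mult; auto).
  assert (M3 : Cmod (u1 * u2)%C = 1) by (apply unit_mult; auto).
  rewrite (L1 b1 b2 b3 s1 s2 s3 v1 v2 v3) by auto.
  rewrite L2 by (apply Re_1plus_nz; apply Re_inner; auto).
  rewrite (L3 _ _ _ _ _ _ _ _ _ _ _ _ _ _ _ Hkp C1 C2 C3' C4).
  assert (EZ : ((z1, z2), z3) = ((u2 * u3 * (z1 / (u2 * u3)), u1 * u3 * (z2 / (u1 * u3))), u1 * u2 * (z3 / (u1 * u2)))%C).
  { f_equal; [f_equal|]; field; split; auto. }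
  rewrite EZ.
  rewrite (L1 a1 a2 a3 r1 r2 r3 u1 u2 u3) by auto.
  rewrite <- (cay_invol (z1 / (u2 * u3))%C) at 2 by (apply disc_1plus_nz; rewrite Cmod_div1; auto).
  rewrite <- (cay_invol (z2 / (u1 * u3))%C) at 2 by (apply disc_1plus_nz; rewrite Cmod_div1; auto).
  rewrite <- (cay_invol (z3 / (u1 * u2))%C) at 2 by (apply disc_1plus_nz; rewrite Cmod_div1; auto).
  rewrite L2. reflexivity.
  all: apply Re_1plus_nz; apply Re_cay; rewrite Cmod_div1; auto. }
assert (M1 : Cmod (u2 * u3)%C = 1) by (apply unit_mult; auto).
assert (M2 : Cmod (u1 * u3)%C = 1) by (apply unit_mult; auto).
assert (M3 : Cmod (u1 * u2)%C = 1) by (apply unit_mult; auto).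
assert (N1 : Cmod (v2 * v3)%C = 1) by (apply unit_mult; auto).
assert (N2 : Cmod (v1 * v3)%C = 1) by (apply unit_mult; auto).
assert (N3 : Cmod (v1 * v2)%C = 1) by (apply unit_mult; auto).
assert (HF : holo_self_map F).
{ apply cw_holo; intros z Hz; unfold inD in *; split;
  first [apply phi_exd | apply phi_disc]; auto. }
assert (HG : holo_self_map G).
{ apply cw_holo; intros z Hz; unfold inD in *; split;
  first [apply phi_exd | apply phi_disc]; auto; apply Rinv_0_lt_compat; auto. }
assert (GF : forall p, inD3 p -> G (F p) = p).
{ intros [[x y] z] [H1 [H2 H3]]. unfold inD, Defs.c1, c2, c3 in H1, H2, H3; simpl in H1, H2, H3.
  unfold G, F, cw, Defs.c1, c2, c3; cbn [fst snd]. rewrite !phi_inv; auto. }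
assert (FG : forall p, inD3 p -> F (G p) = p).
{ intros [[x y] z] [H1 [H2 H3]]. unfold inD, Defs.c1, c2, c3 in H1, H2, H3; simpl in H1, H2, H3.
  unfold G, F, cw, Defs.c1, c2, c3; cbn [fst snd]. rewrite !phi_inv2; auto. }
exists F. split.
- split; auto. exists G. auto.
- intros w. split.
  + intros [Hw Ew]. exists (G w). assert (HGw : inD3 (G w)) by (apply HG; auto).
    split; auto. split; auto. apply (Key (G w) HGw). rewrite FG; auto.
  + intros [z [[Hz Ez] <-]]. split. apply HF; auto. apply Key; auto.
Qed.
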